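(* Let $y_t=\theta_t+Z_t$, $t=1,\dots,n$, where $Z_t$ are independent zero-mean $\sigma$-subgaussian random variables, let $\theta_0=y_0=0$, and let $\delta\in(0,1]$. For $1\le t_h\le t\le n$ define the online-averaging prediction $x_t^{t_h}=y_{t_h-1}$ if $t=t_h$ and $x_t^{t_h}=\bar y_{t_h:t-1}$ if $t>t_h$. Then with probability at least $1-\frac{\delta}{2}$, simultaneously for all $1\le t_h\le t_l\le n$, $$\sum_{t=t_h}^{t_l}(x_t^{t_h}-\theta_t)^2\le 4\sigma^2\log(4n^3/\delta)\big(2+\log(t_l-t_h+1)\big)+2(\theta_{t_h-1}-\theta_{t_h})^2+2\sum_{t=t_h+1}^{t_l}(\bar\theta_{t_h:t-1}-\theta_t)^2.$$
   Context: $\bar y_{a:b}$ and $\bar\theta_{a:b}$ denote the averages of $y_a,\dots,y_b$ and $\theta_a,\dots,\theta_b$ respectively. Logarithms are natural. *)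

(* Defs.v *)
From HB Require Import structures.
From mathcomp Require Import all_boot all_order all_algebra.
From mathcomp Require Import all_classical all_reals all_analysis.
Set Implicit Arguments. Unset Strict Implicit. Unset Printing Implicit Defensive.
Import Order.TTheory GRing.Theory Num.Theory.
Import numFieldNormedType.Exports.
Local Open Scope classical_set_scope.
Local Open Scope ring_scope.

Definition mutually_independent {d} {T : measurableType d} {R : realType}
  (P : probability T R) (n : nat) (Z : nat -> T -> R) : Prop :=
  forall (I : seq nat) (B : nat -> set R),
    uniq I -> all (fun i => (1 <= i <= n)%N) I ->
    (forall i, measurable (B i)) ->
    P (\bigcap_(i in [set` I]) (Z i @^-1` B i)) =
    (\prod_(i <- I) P (Z i @^-1` B i))%E.

Definition subgaussian {d} {T : measurableType d} {R : realType}
  (P : probability T R) (sigma : R) (X : T -> R) : Prop :=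
  forall l : R, (\int[P]_(w in setT) (expR (l * X w))%:E <=
                 (expR (l ^+ 2 * sigma ^+ 2 / 2))%:E)%E.

Definition avg {R : realType} (f : nat -> R) (a b : nat) : R :=
  (\sum_(a <= i < b.+1) f i) / (b.+1 - a)%:R.

Definition online_pred {R : realType} (y : nat -> R) (th t : nat) : R :=
  if t == th then y th.-1 else avg y th t.-1.

(* Main.v *)
Require Import Defs.
From HB Require Import structures.
From mathcomp Require Import all_boot all_order all_algebra.
From mathcomp Require Import all_classical all_reals all_analysis.
From mathcomp Require Import ring lra zify.
From mathcomp Require Import measurable_realfun measurable_fun_approximation.
Import Order.TTheory GRing.Theory Num.Theory.
Import numFieldNormedType.Exports.
Local Open Scope classical_set_scope.
Local Open Scope ring_scope.

Lemma prod_indic {T R : Type} {R' : realType} (J : seq nat) (Z : nat -> T -> R) (B : nat -> set R) (w : T) :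
  \prod_(j <- J) (\1_(B j) (Z j w) : R') = \1_(\bigcap_(j in [set` J]) (Z j @^-1` B j)) w.
Proof.
have [hw|hw] := pselect ((\bigcap_(j in [set` J]) (Z j @^-1` B j)) w).
  rewrite indicE mem_set // big1_seq // => j /andP[_ jJ].
  by rewrite indicE mem_set //; apply: hw.
rewrite indicE memNset //.
have [j jJ hj] : exists2 j, j \in J & ~ B j (Z j w).
  apply: contrapT => hne; apply: hw => j jJ /=.
  apply: contrapT => hj; apply: hne; by exists j.
by rewrite (big_rem j) //= indicE memNset // mul0r.
Qed.

Lemma Pfine {d} {T : measurableType d} {R : realType} (P : probability T R) (A : set T) :
  measurable A -> P A = (fine (P A))%:E.
Proof. by move=> mA; rewrite fineK // fin_num_measure. Qed.

Lemma mpre {d} {T : measurableType d} {R : realType} (f : T -> R) (B : set R) :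
  measurable_fun setT f -> measurable B -> measurable (f @^-1` B).
Proof. by move=> mf mB; rewrite -[_ @^-1` _]setTI; apply: mf. Qed.

Lemma intZ {d} {T : measurableType d} {R : realType} (mu : {measure set T -> \bar R})
  (k : R) (f : T -> R) : 0 <= k -> (forall x, 0 <= f x) -> measurable_fun setT f ->
  (\int[mu]_(x in setT) ((k%:E) * (f x)%:E) = k%:E * \int[mu]_(x in setT) (f x)%:E)%E.
Proof.
move=> k0 f0 mf.
apply: (@ge0_integralZl_EFin _ _ _ mu setT measurableT (fun x => (f x)%:E)) => //.
- by move=> x _; rewrite lee_fin.
- exact/measurable_EFinP.
Qed.

Lemma mprodsum {d} {T : measurableType d} {R : realType} (Z : nat -> T -> R)
  (mZ : forall t, measurable_fun setT (Z t)) (J I K : seq nat) (B C : nat -> set R) (c : nat -> R)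
  (mB : forall j, measurable (B j)) (mC : forall k, measurable (C k)) :
  measurable_fun setT (fun w => (\prod_(j <- J) (\1_(B j) (Z j w) : R)) *
      \prod_(i <- I) \sum_(k <- K) c k * \1_(C k) (Z i w)).
Proof.
apply: measurable_funM; apply: measurable_prod => j _.
  by apply: measurableT_comp => //; apply: measurable_indic.
apply: measurable_sum => k'; apply: measurable_funM; first exact: measurable_cst.
by apply: measurableT_comp => //; apply: measurable_indic.
Qed.

Lemma prodsum_ge0 {T : Type} {R : realType} (Z : nat -> T -> R) (J I K : seq nat) (B C : nat -> set R) (c : nat -> R)
  (c0 : forall k, 0 <= c k) w :
  0 <= (\prod_(j <- J) (\1_(B j) (Z j w) : R)) *
      \prod_(i <- I) \sum_(k <- K) c k * \1_(C k) (Z i w).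
Proof.
apply: mulr_ge0; apply: prodr_ge0 => ? _ //.
by apply: sumr_ge0 => ? _; apply: mulr_ge0.
Qed.

Lemma indep_simple {d} {T : measurableType d} {R : realType} (P : probability T R) n
  (Z : nat -> T -> R) (mZ : forall t, measurable_fun setT (Z t))
  (HI : mutually_independent P n Z)
  (K : seq nat) (c : nat -> R) (C : nat -> set R)
  (c0 : forall k, 0 <= c k) (mC : forall k, measurable (C k)) :
  forall I J (B : nat -> set R), uniq (J ++ I) -> all (fun i => (1 <= i <= n)%N) (J ++ I) ->
  (forall j, measurable (B j)) ->
  (\int[P]_(w in setT) ((\prod_(j <- J) (\1_(B j) (Z j w) : R)) *
      \prod_(i <- I) \sum_(k <- K) c k * \1_(C k) (Z i w))%:E
  = ((\prod_(j <- J) fine (P (Z j @^-1` B j))) *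
      \prod_(i <- I) \sum_(k <- K) c k * fine (P (Z i @^-1` C k)))%:E)%E.
Proof.
elim=> [|i0 I IH] J B uJI aJI mB.
  under eq_integral do rewrite big_nil mulr1 prod_indic.
  rewrite integral_indic //; last first.
    by apply: bigcap_measurableType => j _; apply: mpre.
  rewrite setIT.
  apply: eq_trans; first apply: (HI J B _ _ mB).
  - by rewrite cats0 in uJI.
  - by rewrite cats0 in aJI.
  by rewrite big_nil mulr1 -prodEFin; apply: eq_bigr => j _; rewrite -Pfine //; apply: mpre.
have i0J : i0 \notin J.
  move: uJI; rewrite cat_uniq /= => /and4P[_ /norP[+ _] _ _]. by [].
pose B' k := fun j => if j == i0 then C k else B j.
have eJ k w : \prod_(j <- J) (\1_(B' k j) (Z j w) : R) = \prod_(j <- J) \1_(B j) (Z j w).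
  apply: eq_big_seq => j jJ; rewrite /B'; case: eqP => // ji0.
  by rewrite -ji0 jJ in i0J.
have eJ' k : \prod_(j <- J) fine (P (Z j @^-1` B' k j)) = \prod_(j <- J) fine (P (Z j @^-1` B j)).
  apply: eq_big_seq => j jJ; rewrite /B'; case: eqP => // ji0.
  by rewrite -ji0 jJ in i0J.
have uJI' : uniq ((i0 :: J) ++ I).
  by rewrite -(perm_uniq (permEl (perm_catCA J [:: i0] I))).
have aJI' : all (fun i => (1 <= i <= n)%N) ((i0 :: J) ++ I).
  by rewrite -(perm_all _ (permEl (perm_catCA J [:: i0] I))).
have mB' k j : measurable (B' k j) by rewrite /B'; case: eqP.
transitivity (\int[P]_(w in setT) \sum_(k <- K) (c k)%:E *
   ((\prod_(j <- i0 :: J) (\1_(B' k j) (Z j w) : R)) *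
      \prod_(i <- I) \sum_(k <- K) c k * \1_(C k) (Z i w))%:E)%E.
  apply: eq_integral => w _; rewrite sumEFin; congr (_%:E).
  rewrite !big_cons mulrCA mulr_suml; apply: eq_bigr => k _.
  rewrite big_cons eJ /B' eqxx; ring.
rewrite ge0_integral_sum //; first last.
- move=> k w _; apply: mule_ge0; rewrite ?lee_fin //; exact: prodsum_ge0.
- move=> k; apply/measurable_EFinP => /=.
  apply: measurable_funM; first exact: measurable_cst.
  exact: mprodsum.
transitivity (\sum_(k <- K) ((c k)%:E * ((fine (P (Z i0 @^-1` C k)) *
   \prod_(j <- J) fine (P (Z j @^-1` B j))) *
      \prod_(i <- I) \sum_(k <- K) c k * fine (P (Z i @^-1` C k)))%:E))%E.
  apply: eq_bigr => k _; rewrite intZ //; last exact: mprodsum.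
    by rewrite IH // big_cons eJ' /B' eqxx.
  by move=> w; exact: prodsum_ge0.
rewrite (eq_bigr (fun k => (c k * ((fine (P (Z i0 @^-1` C k)) *
   \prod_(j <- J) fine (P (Z j @^-1` B j))) *
      \prod_(i <- I) \sum_(k <- K) c k * fine (P (Z i @^-1` C k))))%:E)); last by [].
rewrite sumEFin big_cons; congr (_%:E).
rewrite mulr_suml mulr_sumr; apply: eq_bigr => k _; ring.
Qed.

Lemma mdyadic {R : realType} (g : R -> \bar R) (mg : measurable_fun setT g) m k :
  measurable (dyadic_approx setT g m k).
Proof.
rewrite /dyadic_approx; case: ifPn => _ //; rewrite -preimage_comp.
by apply: mg => //; apply/measurable_image_EFin; exact: measurable_itv.
Qed.

Lemma minteger {R : realType} (g : R -> \bar R) (mg : measurable_fun setT g) m :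
  measurable (integer_approx setT g m).
Proof.
rewrite /integer_approx (_ : [set x | _] = g @^-1` [set` Interval (BLeft (m%:R%:E)) +oo%O]).
  by apply: mg => //; exact: emeasurable_itv.
by apply/seteqP; split => x /=; rewrite in_itv /= andbT.
Qed.

Definition cA {R : realType} (m k : nat) : R :=
  if (k < m * 2 ^ m)%N then k%:R * 2 ^- m else m%:R.
Definition CA {R : realType} (g : R -> \bar R) (m k : nat) : set R :=
  if (k < m * 2 ^ m)%N then dyadic_approx setT g m k else integer_approx setT g m.

Lemma cA_ge0 {R : realType} m k : 0 <= (cA m k : R).
Proof. by rewrite /cA; case: ifP. Qed.

Lemma mCA {R : realType} (g : R -> \bar R) (mg : measurable_fun setT g) m k :
  measurable (CA g m k).
Proof. by rewrite /CA; case: ifP => _; [apply: mdyadic | apply: minteger]. Qed.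

Lemma approx_decomp {R : realType} (g : R -> \bar R) m x :
  approx setT g m x = \sum_(k <- index_iota 0 (m * 2 ^ m).+1) cA m k * \1_(CA g m k) x.
Proof.
rewrite big_nat_recr //= /cA /CA ltnn; congr (_ + _).
rewrite big_mkord; apply: eq_bigr => k _; by rewrite ltn_ord.
Qed.

Lemma prod_expR {R : realType} (I : seq nat) (c : R) :
  \prod_(i <- I) expR c = expR (c * (size I)%:R).
Proof.
elim: I => [|i I IH]; first by rewrite big_nil mulr0 expR0.
by rewrite big_cons IH /= -expRD mulrS; congr expR; ring.
Qed.

Lemma expR_sum {R : realType} (I : seq nat) (f : nat -> R) :
  expR (\sum_(i <- I) f i) = \prod_(i <- I) expR (f i).
Proof.
elim: I => [|i I IH]; first by rewrite !big_nil expR0.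
by rewrite !big_cons expRD IH.
Qed.

Lemma cvg_prod_seq {R : realType} (I : seq nat) (u : nat -> nat -> R) (l : nat -> R) :
  (forall i, i \in I -> (u i) @ \oo --> l i) ->
  (fun m => \prod_(i <- I) u i m) @ \oo --> \prod_(i <- I) l i.
Proof.
elim: I => [|i I IH] h.
  rewrite big_nil; under eq_fun do rewrite big_nil; exact: cvg_cst.
rewrite big_cons; under eq_fun do rewrite big_cons.
apply: cvgM; first by apply: h; rewrite mem_head.
by apply: IH => j jI; apply: h; rewrite inE jI orbT.
Qed.

Lemma mgf_le {d} {T : measurableType d} {R : realType} (P : probability T R) n
  (Z : nat -> T -> R) (mZ : forall t, measurable_fun setT (Z t))
  (HI : mutually_independent P n Z) (sigma : R)
  (SG : forall t, (1 <= t <= n)%N -> subgaussian P sigma (Z t)) (lam : R)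
  (I : seq nat) (uI : uniq I) (aI : all (fun i => (1 <= i <= n)%N) I) :
  (\int[P]_(w in setT) (expR (lam * \sum_(i <- I) Z i w))%:E <=
    (expR (lam ^+ 2 * sigma ^+ 2 / 2 * (size I)%:R))%:E)%E.
Proof.
pose g := fun x : R => (expR (lam * x))%:E.
have mg : measurable_fun setT g.
  apply/measurable_EFinP; apply: measurableT_comp; first exact: measurable_expR.
  by apply: measurable_funM => //; exact: measurable_cst.
have g0 : forall x, setT x -> (0 <= g x)%E by move=> x _; rewrite lee_fin expR_ge0.
pose a m x := approx setT g m x.
pose K m := index_iota 0 (m * 2 ^ m).+1.
pose Es m i := \sum_(k <- K m) cA m k * fine (P (Z i @^-1` CA g m k)).
pose G m w := (\prod_(i <- I) a m (Z i w))%:E.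
have a0 m x : 0 <= a m x.
  rewrite /a approx_decomp; apply: sumr_ge0 => k _; apply: mulr_ge0 => //.
  exact: cA_ge0.
have ma m : measurable_fun setT (a m).
  rewrite /a; under eq_fun do rewrite approx_decomp.
  apply: measurable_sum => k; apply: measurable_funM; first exact: measurable_cst.
  by apply: measurable_indic; exact: mCA.
have mG m : measurable_fun setT (G m).
  apply/measurable_EFinP; apply: measurable_prod => i _.
  exact: measurableT_comp.
have G0 m w : (0 <= G m w)%E by rewrite lee_fin; apply: prodr_ge0 => i _.
have int_gen m I' : uniq I' -> all (fun i => (1 <= i <= n)%N) I' ->
    (\int[P]_(w in setT) (\prod_(i <- I') a m (Z i w))%:E = (\prod_(i <- I') Es m i)%:E)%E.
  move=> uI' aI'.
  have := @indep_simple d T R P n Z mZ HI (K m) (cA m) (CA g m) (fun k => cA_ge0 m k)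
    (@mCA R g mg m) I' [::] (fun _ => set0) uI' aI' (fun _ => measurable0).
  rewrite big_nil mul1r => <-; apply: eq_integral => w _.
  by rewrite big_nil mul1r /a; under eq_bigr do rewrite approx_decomp.
have Es_le m i : i \in I -> 0 <= Es m i <= expR (lam ^+ 2 * sigma ^+ 2 / 2).
  move=> iI.
  have iR : (1 <= i <= n)%N by move/allP: aI => /(_ i iI).
  have := int_gen m [:: i] erefl; rewrite /= iR big_seq1 => /(_ erefl) E1.
  apply/andP; split.
    apply: sumr_ge0 => k _; apply: mulr_ge0; first exact: cA_ge0.
    by apply: fine_ge0; apply: measure_ge0.
  rewrite -lee_fin -E1; apply: le_trans; last exact: (SG i iR lam).
  apply: ge0_le_integral => //.
  - by move=> w _; rewrite big_seq1 lee_fin.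
  - apply/measurable_EFinP; under eq_fun do rewrite big_seq1.
    exact: measurableT_comp.
  - apply/measurable_EFinP; apply: measurableT_comp; first exact: measurable_expR.
    by apply: measurable_funM => //; exact: measurable_cst.
  - move=> w _; rewrite big_seq1; exact: (le_approx m (fun x _ => g0 x Logic.I) Logic.I).
have nd w : {homo G^~ w : p q / (p <= q)%N >-> (p <= q)%E}.
  move=> p q pq; rewrite lee_fin; apply: ler_prod => i _; apply/andP; split; first exact: a0.
  by move: (nd_approx setT g pq) => /lefP; apply.
have cvgG w : G^~ w @ \oo --> (\prod_(i <- I) expR (lam * Z i w))%:E.
  apply: cvg_EFin; first by apply: nearW => m.
  apply: cvg_prod_seq => i _.
  exact: (cvg_approx (fun x _ => g0 x Logic.I) Logic.I (ltry _)).
have eqint : (\int[P]_(w in setT) (expR (lam * \sum_(i <- I) Z i w))%:E =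
    \int[P]_(w in setT) (fun w => limn (G^~ w)) w)%E.
  apply: eq_integral => w _; rewrite (cvg_lim _ (cvgG w)) //.
  by rewrite mulr_sumr expR_sum.
rewrite eqint (monotone_convergence P measurableT mG (fun m w _ => G0 m w) (fun w _ => nd w)).
apply: (@lime_le _ _ _ R _ (fun n => \int[P]_(x in setT) G n x)%E).
  apply: ereal_nondecreasing_is_cvgn => p q pq; apply: ge0_le_integral => // w _.
  exact: nd.
apply: filterE => m.
rewrite int_gen //.
rewrite lee_fin -prod_expR.
rewrite big_seq [X in _ <= X]big_seq.
apply: ler_prod => i iI.
exact: Es_le.
Qed.

Lemma mset_le {d} {T : measurableType d} {R : realType} (f g : T -> R) :
  measurable_fun setT f -> measurable_fun setT g -> measurable [set w | (f w <= g w)%R].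
Proof.
by move=> mf mg; rewrite -[X in measurable X]setTI; apply: measurable_fun_le.
Qed.

Lemma mset_lt {d} {T : measurableType d} {R : realType} (f g : T -> R) :
  measurable_fun setT f -> measurable_fun setT g -> measurable [set w | (f w < g w)%R].
Proof.
move=> mf mg; rewrite (_ : [set w | _] = ~` [set w | (g w <= f w)%R]).
  by apply: measurableC; apply: mset_le.
by apply/seteqP; split => w /=; rewrite ltNge => /negP.
Qed.

Lemma tail_exp {d} {T : measurableType d} {R : realType} (P : probability T R)
  (S : T -> R) (mS : measurable_fun setT S) (mu a : R) :
  (P [set w | (a <= mu * S w)%R] * (expR a)%:E <=
    \int[P]_(w in setT) (expR (mu * S w))%:E)%E.
Proof.
have mA : measurable [set w | (a <= mu * S w)%R].
  apply: mset_le; first exact: measurable_cst.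
  by apply: measurable_funM => //; exact: measurable_cst.
rewrite muleC (_ : P [set w | _] = \int[P]_(w in setT) (\1_[set w | (a <= mu * S w)%R] w)%:E)%E; last first.
  by rewrite integral_indic // setIT.
rewrite -intZ //.
apply: ge0_le_integral => //.
- apply/measurable_EFinP; apply: measurable_funM; first exact: measurable_cst.
  exact: measurable_indic.
- apply/measurable_EFinP; apply: measurableT_comp; first exact: measurable_expR.
  by apply: measurable_funM => //; exact: measurable_cst.
move=> w _; rewrite -EFinM lee_fin indicE.
have [hw|hw] := pselect ([set w | (a <= mu * S w)%R] w).
  by rewrite mem_set // mulr1; rewrite ler_expR.
by rewrite memNset // mulr0 expR_ge0.
Qed.

Lemma tail_window {d} {T : measurableType d} {R : realType} (P : probability T R) n
  (Z : nat -> T -> R) (mZ : forall t, measurable_fun setT (Z t))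
  (HI : mutually_independent P n Z) (sigma : R)
  (SG : forall t, (1 <= t <= n)%N -> subgaussian P sigma (Z t))
  (I : seq nat) (uI : uniq I) (aI : all (fun i => (1 <= i <= n)%N) I) (L s : R) :
  0 < L -> 0 < s -> 2 * (size I)%:R * sigma ^+ 2 * L <= s ^+ 2 ->
  (P [set w | (s ^+ 2 <= (\sum_(i <- I) Z i w) ^+ 2)%R] <= (2 * expR (- L))%:E)%E.
Proof.
move=> L0 s0 hs.
set S := fun w => \sum_(i <- I) Z i w.
have mS : measurable_fun setT S by apply: measurable_sum.
set lam := 2 * L / s.
have lam0 : 0 < lam by rewrite /lam divr_gt0 // mulr_gt0.
set c := lam ^+ 2 * sigma ^+ 2 / 2 * (size I)%:R.
have hc : c - lam * s <= - L.
  rewrite /c /lam.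
  have -> : (2 * L / s) ^+ 2 * sigma ^+ 2 / 2 * (size I)%:R =
     L * (2 * (size I)%:R * sigma ^+ 2 * L) / s ^+ 2.
    by field; rewrite gt_eqF.
  have -> : 2 * L / s * s = 2 * L by field; rewrite gt_eqF.
  have : L * (2 * (size I)%:R * sigma ^+ 2 * L) / s ^+ 2 <= L.
    rewrite ler_pdivrMr ?exprn_gt0 //.
    by rewrite ler_pM2l.
  lra.
have one (mu : R) : mu ^+ 2 = lam ^+ 2 ->
    (P [set w | (lam * s <= mu * S w)%R] <= (expR (- L))%:E)%E.
  move=> hmu.
  have mA : measurable [set w | (lam * s <= mu * S w)%R].
    apply: mset_le; first exact: measurable_cst.
    by apply: measurable_funM => //; exact: measurable_cst.
  have h1 := tail_exp P S mS mu (lam * s).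
  have h2 := mgf_le P n Z mZ HI sigma SG mu I uI aI.
  rewrite hmu -/c in h2.
  have := le_trans h1 h2; rewrite (Pfine P _ mA) -EFinM lee_fin => h3.
  rewrite (Pfine P _ mA) lee_fin; apply: le_trans (_ : expR (c - lam * s) <= _); last first.
    by rewrite ler_expR.
  by rewrite expRD expRN ler_pdivlMr ?expR_gt0.
have mA1 : measurable [set w | (lam * s <= lam * S w)%R].
  apply: mset_le; first exact: measurable_cst.
  by apply: measurable_funM => //; exact: measurable_cst.
have mA2 : measurable [set w | (lam * s <= - lam * S w)%R].
  apply: mset_le; first exact: measurable_cst.
  by apply: measurable_funM => //; exact: measurable_cst.
have mB : measurable [set w | (s ^+ 2 <= S w ^+ 2)%R].
  apply: mset_le; first exact: measurable_cst.
  exact: measurable_funX.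
apply: le_trans (_ : (P ([set w | (lam * s <= lam * S w)%R] `|` [set w | (lam * s <= - lam * S w)%R]) <= _)%E).
  apply: le_measure; rewrite ?inE //; first exact: measurableU.
  move=> w /= hw.
  have [S0|S0] := leP 0 (S w).
    left; rewrite ler_pM2l //.
    by rewrite -(@ler_pXn2r _ 2) // ?nnegrE ?ltW.
  right; rewrite mulNr -mulrN ler_pM2l //.
  rewrite -(@ler_pXn2r _ 2) ?nnegrE ?sqrrN //; try exact: ltW.
  by rewrite oppr_ge0 ltW.
apply: (le_trans (measureU2 _ mA1 mA2)).
rewrite (_ : 2 * expR (- L) = expR (- L) + expR (- L)); last by ring.
rewrite EFinD; apply: leeD; apply: one => //; by rewrite sqrrN.
Qed.

Lemma tail_window_strict {d} {T : measurableType d} {R : realType} (P : probability T R) n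
  (Z : nat -> T -> R) (mZ : forall t, measurable_fun setT (Z t))
  (HI : mutually_independent P n Z) (sigma : R)
  (SG : forall t, (1 <= t <= n)%N -> subgaussian P sigma (Z t))
  (I : seq nat) (uI : uniq I) (aI : all (fun i => (1 <= i <= n)%N) I) (L c0 : R) :
  0 < L -> 0 <= c0 -> 2 * (size I)%:R * sigma ^+ 2 * L <= c0 ->
  (P [set w | (c0 < (\sum_(i <- I) Z i w) ^+ 2)%R] <= (2 * expR (- L))%:E)%E.
Proof.
move=> L0 c00 hc.
set S := fun w => \sum_(i <- I) Z i w.
have mS : measurable_fun setT S by apply: measurable_sum.
pose F m := [set w | (c0 + m.+1%:R^-1 <= S w ^+ 2)%R].
have mF m : measurable (F m).
  apply: mset_le; first exact: measurable_cst.
  exact: measurable_funX.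
have FU : [set w | (c0 < S w ^+ 2)%R] = \bigcup_m F m.
  apply/seteqP; split => w /=.
    move=> /ltr_add_invr [k hk]; exists k => //; exact: ltW.
  move=> [m _ hm]; apply: lt_le_trans hm.
  by rewrite ltrDl invr_gt0.
rewrite FU.
have nd : {homo F : p q / (p <= q)%N >-> (p <= q)%O}.
  move=> p q pq; apply/subsetPset => w /=; apply: le_trans.
  rewrite lerD2l lef_pV2 ?posrE ?ltr0n // ler_nat ltnS //.
have := @nondecreasing_cvg_mu _ _ R P F mF (bigcupT_measurable _ mF) nd.
move=> hcvg; rewrite -(cvg_lim _ hcvg) //.
apply: lime_le; first exact: cvgP hcvg.
apply: filterE => m /=.
have hpos : 0 < c0 + m.+1%:R^-1 by rewrite ltr_wpDl // invr_gt0.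
have := tail_window P n Z mZ HI sigma SG I uI aI L (Num.sqrt (c0 + m.+1%:R^-1)) L0.
rewrite sqrtr_gt0 (sqr_sqrtr (ltW hpos)) => /(_ hpos); apply.
apply: le_trans hc _; rewrite lerDl invr_ge0 //.
Qed.

Lemma ln_le_sub1 {R : realType} (y : R) : 0 < y -> ln y <= y - 1.
Proof.
move=> y0; rewrite -ler_expR lnK ?posrE //.
by have := expR_ge1Dx (y - 1); rewrite addrC subrK.
Qed.

Lemma harm_strong {R : realType} (j : nat) :
  \sum_(0 <= k < j.+1) (k.+1%:R : R)^-1 <= 1 + ln (j.+1%:R).
Proof.
elim: j => [|j IH]; first by rewrite big_nat1 ln1 addr0 invr1.
rewrite big_nat_recr //=.
have h : (j.+2%:R : R)^-1 <= ln (j.+2%:R) - ln (j.+1%:R).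
  have := @ln_le_sub1 R (j.+1%:R / j.+2%:R : R) (divr_gt0 (ltr0Sn _ _) (ltr0Sn _ _)).
  rewrite lnM ?posrE ?invr_gt0 ?ltr0Sn // lnV ?posrE ?ltr0Sn //.
  have -> : (j.+1%:R / j.+2%:R : R) - 1 = - (j.+2%:R)^-1.
    rewrite -(natr1 _ j.+1)||rewrite -(@natr1 R j.+1); set x : R := j.+1%:R.
    have x0 : x + 1 != 0 by rewrite /x natr1 pnatr_eq0.
    by field.
  by move=> hh; rewrite -lerN2 opprB.
move: IH h; set H := bigop _ _ _; set a := ln _; set b := ln _; set c := _^-1.
move=> IH h; lra.
Qed.

Lemma harm {R : realType} (j : nat) :
  \sum_(0 <= k < j) (k.+1%:R : R)^-1 <= 1 + ln (j.+1%:R).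
Proof.
apply: le_trans (harm_strong j).
rewrite big_nat_recr //= lerDl invr_ge0 //.
Qed.

Lemma sq_split {R : realType} (a b : R) : (a + b) ^+ 2 <= 2 * a ^+ 2 + 2 * b ^+ 2.
Proof. have := sqr_ge0 (a - b); nra. Qed.

Lemma det {R : realType} (theta Zw : nat -> R) (sigma L : R) (n th tl : nat) :
  theta 0%N = 0 -> 0 <= L -> (1 <= th)%N -> (th <= tl)%N -> (tl <= n)%N ->
  (forall a b, (1 <= a)%N -> (a <= b)%N -> (b <= n)%N ->
     (\sum_(a <= i < b.+1) Zw i) ^+ 2 <= 2 * (b.+1 - a)%:R * sigma ^+ 2 * L) ->
  \sum_(th <= t < tl.+1)
     (online_pred (fun t => if t == 0%N then 0 else theta t + Zw t) th t - theta t) ^+ 2 <=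
   4 * sigma ^+ 2 * L * (2 + ln (tl - th + 1)%:R)
       + 2 * (theta th.-1 - theta th) ^+ 2
       + 2 * \sum_(th.+1 <= t < tl.+1) (avg theta th t.-1 - theta t) ^+ 2.
Proof.
move=> th0 L0 h1 h2 h3 hw.
set yw := fun t => if t == 0%N then 0 else theta t + Zw t.
set s := sigma ^+ 2 * L.
have s0 : 0 <= s by apply: mulr_ge0 => //; exact: sqr_ge0.
have c1 : (online_pred yw th th - theta th) ^+ 2 <=
    2 * (theta th.-1 - theta th) ^+ 2 + 4 * s.
  rewrite /online_pred eqxx /yw.
  have [e|ne] := eqVneq th.-1 0%N.
    rewrite e /= th0.
    have := sqr_ge0 (0 - theta th); lra.
  have := hw th.-1 th.-1; rewrite big_nat1 subSnn leqnn.
  have -> : (1 <= th.-1)%N by rewrite lt0n.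
  have -> : (th.-1 <= n)%N by rewrite (leq_trans (leq_pred _)) // (leq_trans h2).
  move=> /(_ erefl erefl erefl) hz.
  have := sq_split (theta th.-1 - theta th) (Zw th.-1).
  have -> : theta th.-1 - theta th + Zw th.-1 = theta th.-1 + Zw th.-1 - theta th by ring.
  rewrite /s in hz *; lra.
have c2 t : (th.+1 <= t < tl.+1)%N -> (online_pred yw th t - theta t) ^+ 2 <=
    2 * (avg theta th t.-1 - theta t) ^+ 2 + 4 * s * ((t - th)%:R)^-1.
  move=> /andP[ht1 ht2].
  have t0 : (0 < t)%N by apply: leq_trans ht1.
  rewrite /online_pred (gtn_eqF ht1).
  have k0 : (0 < (t - th)%:R :> R) by rewrite ltr0n subn_gt0.
  have e : avg yw th t.-1 = avg theta th t.-1 + (\sum_(th <= i < t) Zw i) / (t - th)%:R.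
    rewrite /avg prednK // -mulrDl -big_split /=; congr (_ / _).
    apply: eq_big_nat => i /andP[hi _]; rewrite /yw ifF //.
    by apply/negbTE; rewrite -lt0n (leq_trans h1 hi).
  have hz := hw th t.-1 h1 (_ : (th <= t.-1)%N) (_ : (t.-1 <= n)%N).
  rewrite prednK // in hz.
  have {}hz := hz ltac:(by rewrite -ltnS prednK) ltac:(by rewrite (leq_trans (leq_pred _)) // (leq_trans _ h3) // -ltnS).
  rewrite e.
  set S := \sum_(th <= i < t) Zw i in hz *.
  set k := (t - th)%:R in k0 hz *.
  have hb : (S / k) ^+ 2 <= 2 * s / k.
    rewrite expr_div_n ler_pdivrMr ?exprn_gt0 //.
    have -> : 2 * s / k * k ^+ 2 = 2 * k * sigma ^+ 2 * L.
      by rewrite /s; field; rewrite gt_eqF.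
    exact: hz.
  have := sq_split (avg theta th t.-1 - theta t) (S / k).
  have -> : avg theta th t.-1 - theta t + S / k = avg theta th t.-1 + S / k - theta t by ring.
  rewrite -/(2 * s / k) mulrA.
  set A := (_ - _) ^+ 2.
  move: hb; set B := (S / k) ^+ 2; set C := 2 * s / k.
  have -> : 4 * s / k = 2 * C by rewrite /C; ring.
  move=> hb h; lra.
rewrite big_ltn ?ltnS //.
apply: le_trans (lerD c1 (ler_sum_nat c2)) _.
rewrite big_split /= -!mulr_sumr.
have hH : \sum_(th.+1 <= t < tl.+1) ((t - th)%:R : R)^-1 <= 1 + ln (tl - th + 1)%:R.
  rewrite -{1}(add0n th.+1) big_addn subSS.
  rewrite (eq_bigr (fun i => (i.+1%:R : R)^-1)); last by move=> i _; rewrite addnS -addSn addnK.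
  by rewrite addn1; apply: harm.
have := ler_wpM2l (_ : 0 <= 4 * s) hH.
move: hH; set H := bigop _ _ _; set X := bigop _ _ _; set l := ln _.
rewrite /s; set q := sigma ^+ 2 * L.
move=> hH h.
have q0 : 0 <= q by [].
have -> : 4 * sigma ^+ 2 * L = 4 * q by rewrite /q mulrA.
set D := (_ - _) ^+ 2.
move: h; rewrite -mulrA => h.
nra.
Qed.


Lemma my_mfun_y {d} {T : measurableType d} {R : realType} (theta : nat -> R) (Z : nat -> T -> R)
  (mZ : forall t, measurable_fun setT (Z t)) k :
  measurable_fun setT (fun w => if k == 0%N then 0 else theta k + Z k w).
Proof.
case: (k == 0%N); first exact: measurable_cst.
by apply: measurable_funD => //; exact: measurable_cst.
Qed.

Lemma mfun_lhs {d} {T : measurableType d} {R : realType} (theta : nat -> R) (Z : nat -> T -> R)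
  (mZ : forall t, measurable_fun setT (Z t)) th tl :
  measurable_fun setT (fun w => \sum_(th <= t < tl.+1)
     (online_pred (fun t => if t == 0%N then 0 else theta t + Z t w) th t - theta t) ^+ 2).
Proof.
apply: measurable_sum => t; apply: measurable_funX.
apply: measurable_funB; last exact: measurable_cst.
rewrite /online_pred; case: (t == th); first exact: my_mfun_y.
rewrite /avg; apply: measurable_funM; last exact: measurable_cst.
by apply: measurable_sum => k; exact: my_mfun_y.
Qed.

Lemma mset_imp3 {d} {T : measurableType d} {R : realType} (b1 b2 b3 : bool) (f g : T -> R) :
  measurable_fun setT f -> measurable_fun setT g ->
  measurable [set w | b1 -> b2 -> b3 -> (f w <= g w)%R].
Proof.
move=> mf mg.
case: b1; case: b2; case: b3;
  try (rewrite (_ : [set w | _] = setT); [exact: measurableT|];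
       by apply/seteqP; split => // w _ ? ? ?).
rewrite (_ : [set w | _] = [set w | (f w <= g w)%R]); first exact: mset_le.
apply/seteqP; split => w /=; first by apply.
by move=> h _ _ _.
Qed.

Theorem lemma7 (d : measure_display) (T : measurableType d) (R : realType)
  (P : probability T R) (n : nat) (sigma delta : R)
  (theta : nat -> R) (Z : nat -> T -> R) :
  theta 0%N = 0 ->
  (forall t, measurable_fun setT (Z t)) ->
  mutually_independent P n Z ->
  (forall t, (1 <= t <= n)%N -> ('E_P[Z t] = 0)%E) ->
  (forall t, (1 <= t <= n)%N -> subgaussian P sigma (Z t)) ->
  0 < delta <= 1 ->
  let y : T -> nat -> R :=
    fun w t => if t == 0%N then 0 else theta t + Z t w in
  (P [set w | forall th tl : nat, (1 <= th)%N -> (th <= tl)%N -> (tl <= n)%N ->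
       (\sum_(th <= t < tl.+1) (online_pred (y w) th t - theta t) ^+ 2 <=
       4 * sigma ^+ 2 * ln (4 * n%:R ^+ 3 / delta) * (2 + ln (tl - th + 1)%:R)
       + 2 * (theta th.-1 - theta th) ^+ 2
       + 2 * \sum_(th.+1 <= t < tl.+1) (avg theta th t.-1 - theta t) ^+ 2)%R]
   >= (1 - delta / 2)%:E)%E.
Proof.
move=> th0 mZ HI EZ SG /andP[d0 d1]; cbv zeta.
set G := [set w | _].
have [n0|n0] := eqVneq n 0%N.
  rewrite (_ : G = setT); last first.
    apply/seteqP; split => // w _ th tl h1 h2 h3.
    by move: h3; rewrite n0 leqn0 => /eqP tl0; move: h2 h1; rewrite tl0 leqn0 => /eqP ->.
  rewrite probability_setT lee_fin; lra.
have n1 : (0 < n)%N by rewrite lt0n.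
set L := ln (4 * n%:R ^+ 3 / delta).
have n3 : 1 <= (n%:R : R) ^+ 3 by rewrite exprn_ege1 // ler1n.
have L0 : 0 < L.
  apply: ln_gt0; rewrite ltr_pdivlMr // mul1r.
  move: n3; set m := (n%:R : R) ^+ 3 => n3; lra.
pose W a b := [set w | (2 * (b.+1 - a)%:R * sigma ^+ 2 * L < (\sum_(a <= k < b.+1) Z k w) ^+ 2)%R].
have mW a b : measurable (W a b).
  apply: mset_lt; first exact: measurable_cst.
  by apply: measurable_funX; apply: measurable_sum.
have PW a b : (1 <= a)%N -> (a <= b)%N -> (b <= n)%N -> (P (W a b) <= (2 * expR (- L))%:E)%E.
  move=> ha hab hb.
  apply: (tail_window_strict P n Z mZ HI sigma SG (index_iota a b.+1) _ _ L
     (2 * (b.+1 - a)%:R * sigma ^+ 2 * L) L0).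
  - exact: iota_uniq.
  - apply/allP => i; rewrite mem_index_iota => /andP[h1 h2]; apply/andP; split; lia.
  - by apply: mulr_ge0 (ltW L0); apply: mulr_ge0 (sqr_ge0 _); apply: mulr_ge0.
  - by rewrite size_iota.
pose V i j := if (i <= j)%N then W i.+1 j.+1 else set0.
pose U i := \big[setU/set0]_(j < n) V i j.
pose Bad := \big[setU/set0]_(i < n) U i.
have mV i j : measurable (V i j) by rewrite /V; case: ifP.
have mU i : measurable (U i) by apply: bigsetU_measurable => j _.
have mBad : measurable Bad by apply: bigsetU_measurable => i _.
have e0 : 0 <= 2 * expR (- L) by apply: mulr_ge0 => //; exact: expR_ge0.
have PV i j : (i < n)%N -> (j < n)%N -> (P (V i j) <= (2 * expR (- L))%:E)%E.
  move=> hi hj; rewrite /V; case: ifP => hij; last by rewrite measure0 lee_fin.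
  by apply: PW.
have PU i : (i < n)%N -> (P (U i) <= (n%:R * (2 * expR (- L)))%:E)%E.
  move=> hi; apply: le_trans; first exact: (Boole_inequality P (A := V i)).
  apply: le_trans (_ : (\sum_(j < n) (2 * expR (- L))%:E <= _)%E).
    by apply: lee_sum => j _; apply: PV.
  by rewrite sumEFin lee_fin sumr_const card_ord [X in _ <= X]mulr_natl.
have PBad : (P Bad <= (n%:R * (n%:R * (2 * expR (- L))))%:E)%E.
  apply: le_trans; first exact: (Boole_inequality P (A := U)).
  apply: le_trans (_ : (\sum_(i < n) (n%:R * (2 * expR (- L)))%:E <= _)%E).
    by apply: lee_sum => i0 _; apply: PU.
  by rewrite sumEFin lee_fin sumr_const card_ord [X in _ <= X]mulr_natl.
have eL : expR (- L) = delta / (4 * n%:R ^+ 3).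
  by rewrite expRN lnK ?invf_div // posrE divr_gt0 // mulr_gt0 // exprn_gt0 // ltr0n n1.
have hB : n%:R * (n%:R * (2 * expR (- L))) <= delta / 2.
  rewrite eL.
  have nz : (n%:R : R) != 0 by rewrite pnatr_eq0 -lt0n.
  have -> : (n%:R : R) * (n%:R * (2 * (delta / (4 * n%:R ^+ 3)))) = delta / 2 / n%:R.
    by field.
  rewrite ler_pdivrMr ?ltr0n // ler_peMr ?ler1n //.
  by apply: divr_ge0 => //; exact: ltW.
have sub : ~` Bad `<=` G.
  move=> w nB th tl h1 h2 h3.
  apply: (det theta (fun t => Z t w) sigma L n th tl th0 (ltW L0) h1 h2 h3).
  move=> a b ha hab hb; rewrite leNgt; apply/negP => hW; apply: nB.
  rewrite /Bad -bigcup_mkord; exists a.-1; first by rewrite /=; lia.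
  rewrite /U -bigcup_mkord; exists b.-1; first by rewrite /=; lia.
  rewrite /V ifT; last by lia.
  by rewrite !prednK //; lia.
have mG : measurable G.
  rewrite (_ : G = \bigcap_(th in [set: nat]) \bigcap_(tl in [set: nat])
     [set w | (1 <= th)%N -> (th <= tl)%N -> (tl <= n)%N ->
       (\sum_(th <= t < tl.+1) (online_pred (fun t => if t == 0%N then 0 else theta t + Z t w) th t - theta t) ^+ 2 <=
       4 * sigma ^+ 2 * L * (2 + ln (tl - th + 1)%:R)
       + 2 * (theta th.-1 - theta th) ^+ 2
       + 2 * \sum_(th.+1 <= t < tl.+1) (avg theta th t.-1 - theta t) ^+ 2)%R]); last first.
    apply/seteqP; split => w /=; first by move=> h th _ tl _; exact: h.
    by move=> h th tl; exact: h th Logic.I tl Logic.I.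
  apply: bigcap_measurableType => th _; apply: bigcap_measurableType => tl _.
  apply: mset_imp3; first exact: mfun_lhs.
  exact: measurable_cst.
apply: le_trans (le_measure _ _ _ sub); rewrite ?inE //; last exact: measurableC.
rewrite [X in (_ <= X)%E](_ : _ = (1 - P Bad)%E); last exact: probability_setC.
rewrite (Pfine P Bad mBad) -EFinB lee_fin.
move: PBad; rewrite (Pfine P Bad mBad) lee_fin => PBad.
move: hB PBad => /=; set p := fine (P Bad); set yy := (n%:R * _)%R => hB PBad.
lra.
Qed.
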